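(* Suppose $N_1\gtrsim1$, $1\lesssim A\ll N_1$ and $k\ll N_1^2$. Decompose $[\frac14N_1,4N_1]$ into a sequence of consecutive intervals $\{I_j\}$, each of length $A^{-1}$. Then there is a mapping $j\mapsto\kappa(j)$ such that for all $x,y\ge0$ with $k\le x^2-y^2\le k+N_1A^{-1}$ and $\frac14N_1\le x,y\le4N_1$, the inclusion $y\in I_j$ implies $x\in I_{\kappa(j)-100}\cup\dots\cup I_{\kappa(j)+100}$. Moreover, as $j$ ranges over all indices, $\kappa(j)$ takes any particular value no more than $100$ times.
   Context: $A\lesssim B$ means $A\le cB$ for an absolute constant $c$; $A\ll B$ means $A\le cB$ for a sufficiently small absolute constant $c$; $N_1,A,k$ are real parameters (with $k$ a real number, not necessarily positive). *)

(* Defs.v *)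
From Stdlib Require Export Reals Lra Lia ZArith List.
Open Scope R_scope.

Definition in_I (N1 A : R) (j : Z) (t : R) : Prop :=
  N1 / 4 + IZR j / A <= t < N1 / 4 + (IZR j + 1) / A.

(* The indices of the decomposition: the intervals I_j meeting [N1/4, 4 N1]
   (j = 0, 1, ..., the last one possibly sticking out past 4 N1). *)
Definition is_index (N1 A : R) (j : Z) : Prop :=
  (0 <= j)%Z /\ N1 / 4 + IZR j / A <= 4 * N1.

(* Main.v *)
Require Import Defs.
From Stdlib Require Import Reals Lra Lia ZArith List.
From Stdlib Require Import ClassicalEpsilon.
Open Scope R_scope.

Lemma sq_bound (N1 e x x' y y' k : R) :
  0 < N1 -> 0 < e ->
  k <= x ^ 2 - y ^ 2 <= k + N1 * e ->
  k <= x' ^ 2 - y' ^ 2 <= k + N1 * e ->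
  N1 / 4 <= x <= 4 * N1 -> N1 / 4 <= y <= 4 * N1 ->
  N1 / 4 <= x' <= 4 * N1 -> N1 / 4 <= y' <= 4 * N1 ->
  - e <= y - y' <= e -> - 18 * e <= x - x' <= 18 * e.
Proof.
  intros HN He Hk Hk' Hx Hy Hx' Hy' Hd.
  assert (H1 : (y - y') * (y + y') <= e * (8 * N1)) by nra.
  assert (H2 : - (e * (8 * N1)) <= (y - y') * (y + y')) by nra.
  assert (H3 : (x - x') * (x + x') <= 9 * N1 * e) by nra.
  assert (H4 : - (9 * N1 * e) <= (x - x') * (x + x')) by nra.
  split.
  - destruct (Rle_dec (- 18 * e) (x - x')) as [h|h]; auto.
    exfalso. nra.
  - destruct (Rle_dec (x - x') (18 * e)) as [h|h]; auto.
    exfalso. nra.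
Qed.

Lemma sq_bound2 (N1 e x x' y y' k : R) :
  0 < N1 -> 0 < e ->
  k <= x ^ 2 - y ^ 2 <= k + N1 * e ->
  k <= x' ^ 2 - y' ^ 2 <= k + N1 * e ->
  N1 / 4 <= x <= 4 * N1 -> N1 / 4 <= y <= 4 * N1 ->
  N1 / 4 <= x' <= 4 * N1 -> N1 / 4 <= y' <= 4 * N1 ->
  - e <= x - x' <= e -> - 18 * e <= y - y' <= 18 * e.
Proof.
  intros HN He Hk Hk' Hx Hy Hx' Hy' Hd.
  assert (H1 : (x - x') * (x + x') <= e * (8 * N1)) by nra.
  assert (H2 : - (e * (8 * N1)) <= (x - x') * (x + x')) by nra.
  assert (H3 : (y - y') * (y + y') <= 9 * N1 * e) by nra.
  assert (H4 : - (9 * N1 * e) <= (y - y') * (y + y')) by nra.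
  split.
  - destruct (Rle_dec (- 18 * e) (y - y')) as [h|h]; auto.
    exfalso. nra.
  - destruct (Rle_dec (y - y') (18 * e)) as [h|h]; auto.
    exfalso. nra.
Qed.

Lemma in_I_e N1 A j t : 0 < A ->
  in_I N1 A j t <-> N1 / 4 + IZR j * / A <= t < N1 / 4 + IZR j * / A + / A.
Proof.
  intros HA. unfold in_I.
  replace (IZR j / A) with (IZR j * / A) by reflexivity.
  replace ((IZR j + 1) / A) with (IZR j * / A + / A) by (unfold Rdiv; ring).
  replace (N1 / 4 + (IZR j * / A + / A)) with (N1 / 4 + IZR j * / A + / A) by ring.
  tauto.
Qed.

Definition idx (N1 A x : R) : Z := (up ((x - N1 / 4) * A) - 1)%Z.

Lemma idx_in N1 A x : 0 < A -> in_I N1 A (idx N1 A x) x.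
Proof.
  intros HA. apply in_I_e; auto. unfold idx.
  destruct (archimed ((x - N1 / 4) * A)) as [h1 h2].
  rewrite minus_IZR. set (u := IZR (up ((x - N1 / 4) * A))) in *.
  assert (Hi : 0 < / A) by (apply Rinv_0_lt_compat; auto).
  assert (E : (x - N1 / 4) * A * / A = x - N1 / 4) by (field; lra).
  split; nra.
Qed.

Lemma idx_nonneg N1 A x : 0 < A -> N1 / 4 <= x -> (0 <= idx N1 A x)%Z.
Proof.
  intros HA Hx. unfold idx.
  destruct (archimed ((x - N1 / 4) * A)) as [h1 h2].
  assert (0 <= (x - N1 / 4) * A) by nra.
  assert (0 < IZR (up ((x - N1 / 4) * A))) by lra.
  apply lt_IZR in H0. lia.
Qed.

Lemma in_I_idx_bound N1 A i i' t t' (d : Z) : 0 < A ->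
  in_I N1 A i t -> in_I N1 A i' t' -> t - t' <= IZR d * / A -> (i - i' < d + 1)%Z.
Proof.
  intros HA H H' Hd. apply in_I_e in H; auto. apply in_I_e in H'; auto.
  assert (Hi : 0 < / A) by (apply Rinv_0_lt_compat; auto).
  assert ((IZR i - IZR i' - IZR d - 1) * / A < 0) by nra.
  assert (IZR i - IZR i' - IZR d - 1 < 0) by nra.
  apply lt_IZR. rewrite plus_IZR, minus_IZR. simpl. lra.
Qed.

Lemma range_len (l : list Z) (a : Z) (n : nat) : NoDup l ->
  (forall j, In j l -> (a <= j < a + Z.of_nat n)%Z) -> (length l <= n)%nat.
Proof.
  intros Hn Hr.
  replace n with (length (map (fun i => (a + Z.of_nat i)%Z) (seq 0 n)))
    by (rewrite length_map, length_seq; auto).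
  apply NoDup_incl_length; auto.
  intros j Hj. apply in_map_iff. exists (Z.to_nat (j - a)).
  specialize (Hr j Hj). split; [lia|]. apply in_seq. lia.
Qed.

Theorem lemmaA1 :
  forall c1 c2 : R, 0 < c1 -> 0 < c2 ->
  exists c : R, 0 < c /\
  forall N1 A k : R,
    c1 <= N1 -> c2 <= A -> A <= c * N1 -> k <= c * N1 ^ 2 ->
    exists kappa : Z -> Z,
      (forall (x y : R) (j : Z),
         0 <= x -> 0 <= y ->
         k <= x ^ 2 - y ^ 2 <= k + N1 / A ->
         N1 / 4 <= x <= 4 * N1 -> N1 / 4 <= y <= 4 * N1 ->
         in_I N1 A j y ->
         exists i : Z, (kappa j - 100 <= i <= kappa j + 100)%Z /\ in_I N1 A i x)
      /\
      (forall (m : Z) (l : list Z),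
         NoDup l ->
         (forall j, In j l -> is_index N1 A j /\ kappa j = m) ->
         (length l <= 100)%nat).
Proof.
  intros c1 c2 Hc1 Hc2. exists 1. split; [lra|].
  intros N1 A k HN HA _ _.
  assert (HN0 : 0 < N1) by lra. assert (HA0 : 0 < A) by lra.
  assert (He : 0 < / A) by (apply Rinv_0_lt_compat; auto).
  set (P := fun (j : Z) (p : R * R) =>
    k <= fst p ^ 2 - snd p ^ 2 <= k + N1 * / A /\
    (N1 / 4 <= fst p <= 4 * N1) /\ (N1 / 4 <= snd p <= 4 * N1) /\
    in_I N1 A j (snd p)).
  set (kappa := fun j =>
    match excluded_middle_informative (exists p, P j p) with
    | left _ => idx N1 A (fst (epsilon (inhabits (0, 0)) (P j)))
    | right _ => (-1 - j)%Z end).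
  assert (Hk1 : forall j, (exists p, P j p) ->
     P j (epsilon (inhabits (0, 0)) (P j)) /\
     kappa j = idx N1 A (fst (epsilon (inhabits (0, 0)) (P j)))).
  { intros j Hj. split. apply epsilon_spec; auto.
    unfold kappa. destruct (excluded_middle_informative _); tauto. }
  assert (Hk2 : forall j, ~ (exists p, P j p) -> kappa j = (-1 - j)%Z).
  { intros j Hj. unfold kappa. destruct (excluded_middle_informative _); tauto. }
  exists kappa. split.
  - intros x y j Hx Hy Hk Hxr Hyr HI.
    assert (Hex : exists p, P j p).
    { exists (x, y). unfold P; simpl. repeat split; try lra; apply HI. }
    destruct (Hk1 j Hex) as [[Hk0 [Hx0 [Hy0 HI0]]] Ekj].
    set (p0 := epsilon (inhabits (0, 0)) (P j)) in *.
    exists (idx N1 A x). split; [|apply idx_in; auto].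
    rewrite Ekj.
    pose proof (in_I_e N1 A j y HA0) as E1. pose proof (in_I_e N1 A j (snd p0) HA0) as E2.
    assert (Hyy : - / A <= y - snd p0 <= / A) by (apply E1 in HI; apply E2 in HI0; lra).
    unfold Rdiv in Hk.
    pose proof (sq_bound N1 (/ A) x (fst p0) y (snd p0) k HN0 He Hk Hk0 Hxr Hyr Hx0 Hy0 Hyy) as B.
    pose proof (idx_in N1 A x HA0). pose proof (idx_in N1 A (fst p0) HA0).
    assert (A1 := in_I_idx_bound N1 A _ _ _ _ 18 HA0 H H0 ltac:(lra)).
    assert (A2 := in_I_idx_bound N1 A _ _ _ _ 18 HA0 H0 H ltac:(lra)).
    lia.
  - intros m l Hnd Hl.
    assert (Hpair : forall j j', In j l -> In j' l -> (j - j' <= 19)%Z).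
    { intros j j' Hj Hj'.
      destruct (Hl j Hj) as [[Hj0 _] Ej]. destruct (Hl j' Hj') as [[Hj0' _] Ej'].
      destruct (classic (exists p, P j p)) as [W|W];
      destruct (classic (exists p, P j' p)) as [W'|W'].
      + destruct (Hk1 j W) as [[Hk0 [Hx0 [Hy0 HI0]]] E0].
        destruct (Hk1 j' W') as [[Hk0' [Hx0' [Hy0' HI0']]] E0'].
        set (p0 := epsilon (inhabits (0, 0)) (P j)) in *.
        set (p0' := epsilon (inhabits (0, 0)) (P j')) in *.
        pose proof (idx_in N1 A (fst p0) HA0) as I1.
        pose proof (idx_in N1 A (fst p0') HA0) as I2.
        assert (Eq : idx N1 A (fst p0) = idx N1 A (fst p0')) by congruence.
        rewrite Eq in I1.
        apply in_I_e in I1; auto. apply in_I_e in I2; auto.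
        assert (Hxx : - / A <= fst p0 - fst p0' <= / A) by lra.
        pose proof (sq_bound2 N1 (/ A) _ _ _ _ k HN0 He Hk0 Hk0' Hx0 Hy0 Hx0' Hy0' Hxx) as B.
        assert (A1 := in_I_idx_bound N1 A _ _ _ _ 18 HA0 HI0 HI0' ltac:(lra)).
        lia.
      + destruct (Hk1 j W) as [[_ [Hx0 _]] E0]. rewrite (Hk2 j' W') in Ej'.
        pose proof (idx_nonneg N1 A _ HA0 (proj1 Hx0)). lia.
      + destruct (Hk1 j' W') as [[_ [Hx0 _]] E0]. rewrite (Hk2 j W) in Ej.
        pose proof (idx_nonneg N1 A _ HA0 (proj1 Hx0)). lia.
      + rewrite (Hk2 j W) in Ej. rewrite (Hk2 j' W') in Ej'. lia. }
    destruct l as [|j0 l'].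
    + simpl. lia.
    + apply Nat.le_trans with 39%nat; [|lia]. apply (range_len _ (j0 - 19)%Z 39); auto.
      intros j Hj. pose proof (Hpair j j0 Hj (or_introl eq_refl)).
      pose proof (Hpair j0 j (or_introl eq_refl) Hj). lia.
Qed.
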